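(* Let $(S,\mathcal C)$ be a connectoid and $T$ a rooted undirected tree with $V(T)\subseteq S$. Then $T$ is a weak normal tree of $(S,\mathcal C)$ if and only if $K_t^T\cap V(T)=\mathrm{Up}_T(t)$ for every $t\in V(T)$. Furthermore, if $T$ is a weak normal tree with $V(T)=S$, then $K_t^T=\mathrm{Up}_T(t)$ for every $t\in V(T)$.
   Context: A connectoid is given by a set $S$ and a set $\mathcal F$ of finite subsets of $S$ such that (i) $F\cup F'\in\mathcal F$ whenever $F,F'\in\mathcal F$ and $F\cap F'\neq\emptyset$, and (ii) $\emptyset\in\mathcal F$ and $\{s\}\in\mathcal F$ for every $s\in S$. A set $C\subseteq S$ is connected if for all $x,y\in C$ there is $F\in\mathcal F$ with $F\subseteq C$ and $x,y\in F$; $\mathcal C$ is the set of connected sets. For $S'\subseteq S$, a component of $S'$ is a maximal connected subset of $S'$, and $\mathcal K(S')$ is the set of components of $S'$. For a rooted tree $T$ with tree order $\le_T$ (root is the minimum) and $t\in V(T)$: $\mathrm{Up}_T(t)=\{x\in V(T):t\le_T x\}$, $\mathrm{Down}^\circ_T(t)=\{x\in V(T):x<_T t\}$, and $K_t^T$ denotes the element of $\mathcal K(S\setminus\mathrm{Down}^\circ_T(t))$ containing $t$. A weak normal tree of $(S,\mathcal C)$ is a rooted undirected tree $T$ with $V(T)\subseteq S$ such that (1) for every $C\in\mathcal C$ and every two $\le_T$-incomparable $u,v\in C\cap V(T)$ there is $w\in C$ with $w\le_T u$ and $w\le_T v$, and (2) for all $u\le_T v$ in $V(T)$ there is $C\in\mathcal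 C$ containing $u$ and $v$ with $C\cap\mathrm{Down}^\circ_T(u)=\emptyset$. *)

(* Defs.v *)
From Stdlib Require Import List.
Import ListNotations.
Set Implicit Arguments.

Section Defs.
Variable S : Type.

Definition subset (A B : S -> Prop) : Prop := forall x, A x -> B x.

Definition finite_set (A : S -> Prop) : Prop :=
  exists l : list S, forall x, A x <-> In x l.

Definition connectoid (F : (S -> Prop) -> Prop) : Prop :=
  (forall A, F A -> finite_set A) /\
  (forall A B, F A -> F B -> (exists x, A x /\ B x) ->
     F (fun x => A x \/ B x)) /\
  F (fun _ => False) /\
  (forall s, F (fun x => x = s)).

Definition connected (F : (S -> Prop) -> Prop) (C : S -> Prop) : Prop :=
  forall x y, C x -> C y ->
    exists A, F A /\ subset A C /\ A x /\ A y.

Definition component_of (F : (S -> Prop) -> Prop) (X K : S -> Prop) : Prop :=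
  subset K X /\ connected F K /\
  (forall K', subset K K' -> subset K' X -> connected F K' -> subset K' K).

Fixpoint adj_chain (E : S -> S -> Prop) (p : list S) : Prop :=
  match p with
  | x :: ((y :: _) as q) => E x y /\ adj_chain E q
  | _ => True
  end.

Definition is_path (V : S -> Prop) (E : S -> S -> Prop) (a b : S) (p : list S) : Prop :=
  (exists q, p = a :: q /\ last p a = b) /\
  NoDup p /\ Forall V p /\ adj_chain E p.

Definition simple_graph (V : S -> Prop) (E : S -> S -> Prop) : Prop :=
  (forall x y, E x y -> V x /\ V y) /\
  (forall x y, E x y -> E y x) /\
  (forall x, ~ E x x).

Definition has_cycle (V : S -> Prop) (E : S -> S -> Prop) : Prop :=
  exists x p, 2 <= length p /\ NoDup (x :: p) /\ Forall V (x :: p) /\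
    adj_chain E (x :: p) /\ E (last p x) x.

Definition tree (V : S -> Prop) (E : S -> S -> Prop) : Prop :=
  simple_graph V E /\
  (forall a b, V a -> V b -> exists p, is_path V E a b p) /\
  ~ has_cycle V E.

Definition rooted_tree (V : S -> Prop) (E : S -> S -> Prop) (r : S) : Prop :=
  tree V E /\ V r.

Definition tree_le (V : S -> Prop) (E : S -> S -> Prop) (r : S) (x y : S) : Prop :=
  V x /\ V y /\ exists p, is_path V E r y p /\ In x p.

Definition tree_lt (V : S -> Prop) (E : S -> S -> Prop) (r : S) (x y : S) : Prop :=
  tree_le V E r x y /\ x <> y.

Definition Up (V : S -> Prop) (E : S -> S -> Prop) (r t : S) : S -> Prop :=
  fun x => tree_le V E r t x.

Definition Down_open (V : S -> Prop) (E : S -> S -> Prop) (r t : S) : S -> Prop :=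
  fun x => tree_lt V E r x t.

Definition weak_normal_tree (F : (S -> Prop) -> Prop)
    (V : S -> Prop) (E : S -> S -> Prop) (r : S) : Prop :=
  (forall C, connected F C -> forall u v, C u -> C v -> V u -> V v ->
     ~ tree_le V E r u v -> ~ tree_le V E r v u ->
     exists w, C w /\ tree_le V E r w u /\ tree_le V E r w v) /\
  (forall u v, tree_le V E r u v ->
     exists C, connected F C /\ C u /\ C v /\
       (forall x, C x -> ~ Down_open V E r u x)).

Definition outside_down (V : S -> Prop) (E : S -> S -> Prop) (r t : S) : S -> Prop :=
  fun x => ~ Down_open V E r t x.

End Defs.

(* Main.v *)
Require Import Defs.
From Stdlib Require Import List Classical Lia.
Import ListNotations.

Lemma last_d {S} (x : S) l d1 d2 : last (x :: l) d1 = last (x :: l) d2.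
Proof.
  revert x; induction l as [|y l IH]; intros x; [reflexivity|].
  change (last (y::l) d1 = last (y::l) d2). apply IH.
Qed.

Lemma last_in {S} (x : S) l d : In (last (x :: l) d) (x :: l).
Proof.
  revert x; induction l as [|y l IH]; intros x; [simpl; auto|].
  change (In (last (y::l) d) (x :: y :: l)). right. apply IH.
Qed.

Lemma last_rev_head {S} (l : list S) d z s : rev l = z :: s -> last l d = z.
Proof.
  intros H. rewrite <- (rev_involutive l), H. simpl. apply last_last.
Qed.

Lemma last_app_ne {S} (l1 l2 : list S) d : l2 <> [] -> last (l1 ++ l2) d = last l2 d.
Proof.
  intros H; induction l1 as [|a l1 IH]; [reflexivity|].
  simpl. destruct (l1 ++ l2) eqn:E0.
  - apply app_eq_nil in E0; tauto.
  - exact IH.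
Qed.

Lemma chain_app {S} (E : S -> S -> Prop) l1 x l2 :
  adj_chain E (l1 ++ x :: l2) <-> adj_chain E (l1 ++ [x]) /\ adj_chain E (x :: l2).
Proof.
  induction l1 as [|a l1 IH].
  - simpl. tauto.
  - destruct l1 as [|b l1']; simpl in *.
    + destruct l2; simpl; tauto.
    + rewrite IH. tauto.
Qed.

Lemma chain_rev {S} (E : S -> S -> Prop) (Hs : forall x y, E x y -> E y x) l :
  adj_chain E l -> adj_chain E (rev l).
Proof.
  induction l as [|a l IH]; intros H; [simpl; auto|].
  destruct l as [|b l]; [simpl; auto|].
  destruct H as [Hab H]. specialize (IH H).
  change (adj_chain E ((rev l ++ [b]) ++ [a])).
  rewrite <- app_assoc. apply chain_app. split.
  - exact IH.
  - simpl. auto.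
Qed.

Lemma walk_path {S} (E : S -> S -> Prop) : forall w y, adj_chain E (y :: w) ->
  exists p, NoDup (y :: p) /\ adj_chain E (y :: p) /\
    last (y :: p) y = last (y :: w) y /\ incl (y :: p) (y :: w).
Proof.
  induction w as [|z w IH]; intros y H.
  - exists []. split; [constructor; [auto|constructor]|].
    split; [simpl; auto|]. split; [reflexivity|apply incl_refl].
  - destruct H as [Hyz Hc]. destruct (IH z Hc) as [p [Hnd [Hch [Hl Hi]]]].
    destruct (classic (In y (z :: p))) as [Hin|Hnin].
    + apply in_split in Hin. destruct Hin as [l1 [l2 Heq]].
      exists l2. rewrite Heq in Hnd, Hch, Hl, Hi.
      split; [|split; [|split]].
      * apply NoDup_app_remove_l in Hnd; auto.
      * apply chain_app in Hch; tauto.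
      * rewrite last_app_ne in Hl by discriminate.
        rewrite (last_d y l2 z y) in Hl.
        change (last (y :: l2) y = last (z :: w) y). rewrite Hl. apply last_d.
      * intros v Hv. right. apply Hi. apply in_or_app. right. exact Hv.
    + exists (z :: p). split; [|split; [|split]].
      * constructor; auto.
      * split; auto.
      * change (last (z::p) y = last (z::w) y). rewrite (last_d z p y z), Hl. apply last_d.
      * intros v [Hv|Hv]; [left; auto|]. right. apply Hi. exact Hv.
Qed.

Lemma path_unique {S} {V : S -> Prop} {E} :
  simple_graph V E -> ~ has_cycle V E ->
  forall p' a b q', is_path V E a b (a :: p') -> is_path V E a b (a :: q') -> p' = q'.
Proof.
  intros [HE [Hsym Hirr]] Hnc.
  induction p' as [|x px IH]; intros a b q' [[q0 [_ Hlp]] [Hndp [HVp Hcp]]]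
    [[q1 [_ Hlq]] [Hndq [HVq Hcq]]].
  - simpl in Hlp. rewrite <- Hlp in Hlq. destruct q' as [|z qz]; auto. exfalso.
    change (last (z::qz) a = a) in Hlq.
    apply NoDup_cons_iff in Hndq as [Hn _]. apply Hn. rewrite <- Hlq at 1. apply last_in.
  - destruct q' as [|y qy].
    + simpl in Hlq. rewrite <- Hlq in Hlp. exfalso. change (last (x::px) a = a) in Hlp.
      apply NoDup_cons_iff in Hndp as [Hn _]. apply Hn. rewrite <- Hlp at 1. apply last_in.
    + destruct (classic (x = y)) as [Hxy|Hxy].
      * subst y. f_equal. apply (IH x b qy).
        -- split. exists px; split; auto.
           change (last (x :: px) a = b) in Hlp. rewrite (last_d x px x a); exact Hlp.
           split. apply NoDup_cons_iff in Hndp; tauto.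
           split. apply Forall_inv_tail in HVp; exact HVp.
           exact (proj2 Hcp).
        -- split. exists qy; split; auto.
           change (last (x :: qy) a = b) in Hlq. rewrite (last_d x qy x a); exact Hlq.
           split. apply NoDup_cons_iff in Hndq; tauto.
           split. apply Forall_inv_tail in HVq; exact HVq.
           exact (proj2 Hcq).
      * exfalso. apply Hnc.
        change (last (x :: px) a = b) in Hlp. change (last (y :: qy) a = b) in Hlq.
        set (l1 := removelast (x :: px)). set (m1 := removelast (y :: qy)).
        assert (Ex : x :: px = l1 ++ [b]).
        { rewrite <- Hlp. apply app_removelast_last. discriminate. }
        assert (Ey : y :: qy = m1 ++ [b]).
        { rewrite <- Hlq. apply app_removelast_last. discriminate. }
        assert (HW : l1 ++ b :: rev m1 = x :: (px ++ rev m1)).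
        { replace (l1 ++ b :: rev m1) with ((l1 ++ [b]) ++ rev m1)
            by (rewrite <- app_assoc; reflexivity). rewrite <- Ex. reflexivity. }
        assert (Hch : adj_chain E (x :: (px ++ rev m1))).
        { rewrite <- HW. apply chain_app. split.
          - rewrite <- Ex. exact (proj2 Hcp : adj_chain E (x :: px)).
          - assert (Hr := chain_rev E Hsym (y :: qy) (proj2 Hcq)).
            rewrite Ey, rev_app_distr in Hr. exact Hr. }
        assert (Hlast : last (x :: (px ++ rev m1)) x = y).
        { apply (last_rev_head _ _ _ (qy ++ rev l1)). rewrite <- HW.
          rewrite rev_app_distr. simpl. rewrite rev_involutive, <- app_assoc.
          change (m1 ++ [b] ++ rev l1 = (y :: qy) ++ rev l1).
          rewrite Ey, <- app_assoc. reflexivity. }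
        assert (Hmem : forall v, In v (x :: (px ++ rev m1)) -> In v (x :: px) \/ In v (y :: qy)).
        { intros v Hv. change (In v ((x :: px) ++ rev m1)) in Hv.
          apply in_app_or in Hv. destruct Hv as [Hv|Hv]; [left; auto|right].
          apply in_rev in Hv. rewrite Ey. apply in_or_app. left; exact Hv. }
        destruct (walk_path E _ _ Hch) as [p [Hnd [Hc [Hl Hi]]]].
        rewrite Hlast in Hl.
        exists a, (x :: p). split; [|split; [|split; [|split]]].
        -- destruct p as [|z p3]. simpl in Hl. congruence. simpl. lia.
        -- constructor; auto. intros Ha. apply Hi, Hmem in Ha.
           apply NoDup_cons_iff in Hndp as [Hn1 _]. apply NoDup_cons_iff in Hndq as [Hn2 _].
           tauto.
        -- apply Forall_forall. intros v [<-|Hv].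
           ++ exact (Forall_inv HVp).
           ++ apply Hi, Hmem in Hv. destruct Hv as [Hv|Hv].
              ** rewrite Forall_forall in HVp. apply HVp. right; exact Hv.
              ** rewrite Forall_forall in HVq. apply HVq. right; exact Hv.
        -- split; [exact (proj1 Hcp)|exact Hc].
        -- rewrite (last_d x p a x), Hl. apply Hsym. exact (proj1 Hcq).
Qed.

Lemma prefix_path {S} {V E} {r u t : S} {l1 l2} : is_path V E r u (l1 ++ t :: l2) ->
  exists q, l1 ++ [t] = r :: q /\ is_path V E r t (l1 ++ [t]).
Proof.
  intros [[q [Hq Hl]] [Hnd [HV Hch]]].
  assert (H : exists q', l1 ++ [t] = r :: q').
  { destruct l1 as [|z l1]; simpl in Hq; injection Hq as H1 H2; subst;
      eexists; reflexivity. }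
  destruct H as [q' Hq']. exists q'. split; auto.
  replace (l1 ++ t :: l2) with ((l1 ++ [t]) ++ l2) in Hnd, HV
    by (rewrite <- app_assoc; reflexivity).
  split; [exists q'; split; auto; apply last_last|].
  split; [apply NoDup_app_remove_r in Hnd; exact Hnd|].
  split; [apply Forall_app in HV; tauto|].
  apply chain_app in Hch; tauto.
Qed.

Lemma first_in {S} (P : S -> Prop) l : (exists y, In y l /\ P y) ->
  exists l1 t l2, l = l1 ++ t :: l2 /\ P t /\ forall z, In z l1 -> ~ P z.
Proof.
  induction l as [|a l IH]; intros [y [Hy Py]]; [destruct Hy|].
  destruct (classic (P a)) as [Ha|Ha].
  - exists [], a, l. split; [reflexivity|]. split; [exact Ha|]. intros z [].
  - destruct Hy as [<-|Hy]; [contradiction|].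
    destruct IH as [l1 [t [l2 [Heq [Pt Hn]]]]]; [eauto|].
    exists (a :: l1), t, l2. subst. split; [reflexivity|]. split; [exact Pt|].
    intros z [<-|Hz]; auto.
Qed.

Lemma conn_pair {S} {F : (S -> Prop) -> Prop} (HF : connectoid F) Ca Cb D t x y :
  connected F Ca -> connected F Cb -> Ca t -> Cb t -> Ca x -> Cb y ->
  subset Ca D -> subset Cb D -> exists A, F A /\ subset A D /\ A x /\ A y.
Proof.
  intros Ha Hb Cat Cbt Cax Cby SaD SbD. destruct HF as [_ [Hu _]].
  destruct (Ha x t Cax Cat) as [A [FA [SA [Ax At]]]].
  destruct (Hb t y Cbt Cby) as [B [FB [SB [Bt By]]]].
  exists (fun z => A z \/ B z). split; [apply Hu; eauto|].
  split; [|auto]. intros z [Hz|Hz]; [apply SaD, SA; auto|apply SbD, SB; auto].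
Qed.

Lemma union_conn {S} {F : (S -> Prop) -> Prop} (HF : connectoid F) C1 C2 t :
  connected F C1 -> connected F C2 -> C1 t -> C2 t ->
  connected F (fun z => C1 z \/ C2 z).
Proof.
  intros H1 H2 t1 t2 x y Hx Hy.
  assert (S1 : subset C1 (fun z => C1 z \/ C2 z)) by (intros z; auto).
  assert (S2 : subset C2 (fun z => C1 z \/ C2 z)) by (intros z; auto).
  destruct Hx as [Hx|Hx]; destruct Hy as [Hy|Hy].
  - apply (conn_pair HF C1 C1 _ t); auto.
  - apply (conn_pair HF C1 C2 _ t); auto.
  - apply (conn_pair HF C2 C1 _ t); auto.
  - apply (conn_pair HF C2 C2 _ t); auto.
Qed.

Lemma comp_contains {S} {F : (S -> Prop) -> Prop} (HF : connectoid F) X K C t :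
  component_of F X K -> K t -> connected F C -> subset C X -> C t -> subset C K.
Proof.
  intros [KX [Kc Kmax]] Kt Cc CX Ct z Cz.
  apply (Kmax (fun z => K z \/ C z)); auto.
  - intros w Hw; left; auto.
  - intros w [Hw|Hw]; auto.
  - apply (union_conn HF) with t; auto.
Qed.

Definition Kt {S} (F : (S -> Prop) -> Prop) V E (r t : S) : S -> Prop :=
  fun x => exists C, connected F C /\ subset C (outside_down V E r t) /\ C t /\ C x.

Lemma Kt_comp {S} {F : (S -> Prop) -> Prop} (HF : connectoid F) V E (r t : S) :
  component_of F (outside_down V E r t) (Kt F V E r t) /\ Kt F V E r t t.
Proof.
  assert (Ht : Kt F V E r t t).
  { exists (fun z => z = t). split; [|split; [|split; auto]].
    - intros x y -> ->. exists (fun z => z = t). split; [apply HF|].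
      split; [intros z; auto|auto].
    - intros z -> [_ Hne]. apply Hne; reflexivity. }
  split; [|exact Ht]. split; [|split].
  - intros z [C [_ [CX [_ Cz]]]]. apply CX, Cz.
  - intros x y [C1 [H1 [S1 [t1 x1]]]] [C2 [H2 [S2 [t2 y2]]]].
    apply (conn_pair HF C1 C2 _ t); auto.
    + intros z Hz. exists C1; auto.
    + intros z Hz. exists C2; auto.
  - intros K' HK' K'X K'c z Hz. exists K'. split; auto.
Qed.

Lemma fwd {S} {F : (S -> Prop) -> Prop} (HF : connectoid F) {V E} {r : S} :
  weak_normal_tree F V E r ->
  forall t, V t -> forall K, component_of F (outside_down V E r t) K -> K t ->
    forall x, (K x /\ V x) <-> Up V E r t x.
Proof.
  intros [W1 W2] t Vt K HK Kt0 x. split.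
  - intros [Kx Vx]. destruct (classic (tree_le V E r t x)) as [H|Ntx]; [exact H|].
    destruct HK as [KX [Kc _]].
    destruct (classic (tree_le V E r x t)) as [Hxt|Nxt].
    + exfalso. apply (KX x Kx). split; auto. intros ->. contradiction.
    + destruct (W1 K Kc t x Kt0 Kx Vt Vx Ntx Nxt) as [w [Kw [Hwt Hwx]]].
      destruct (classic (w = t)) as [->|Hne]; [exact Hwx|].
      exfalso. apply (KX w Kw). split; auto.
  - intros Hup. destruct (W2 t x Hup) as [C [Cc [Ct [Cx CX]]]].
    split; [|exact (proj1 (proj2 Hup))].
    apply (comp_contains HF (outside_down V E r t) K C t); auto.
Qed.

Theorem proposition2p4 (S : Type) (F : (S -> Prop) -> Prop)
  (V : S -> Prop) (E : S -> S -> Prop) (r : S) :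
  connectoid F -> rooted_tree V E r ->
  (weak_normal_tree F V E r <->
     (forall t, V t -> forall K, component_of F (outside_down V E r t) K -> K t ->
        forall x, (K x /\ V x) <-> Up V E r t x)) /\
  (weak_normal_tree F V E r -> (forall x, V x) ->
     forall t, V t -> forall K, component_of F (outside_down V E r t) K -> K t ->
        forall x, K x <-> Up V E r t x).
Proof.
  intros HF [[Hsg [Hconn Hnc]] Vr]. split; [split|].
  - apply (fwd HF).
  - intros H. split.
    + intros C HC u v Cu Cv Vu Vv Nuv Nvu.
      destruct (Hconn r u Vr Vu) as [p Hp].
      assert (Hp' := Hp). destruct Hp' as [[q [Hpq Hlast]] [Hnd [HV Hch]]].
      assert (Hu : In u p) by (subst p; rewrite <- Hlast; apply last_in).
      destruct (first_in C p) as [l1 [t [l2 [Heq [Ct Hn]]]]]; [eauto|].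
      assert (Htu : tree_le V E r t u).
      { split; [|split; auto]. rewrite Forall_forall in HV. apply HV.
        rewrite Heq. apply in_or_app. right; left; reflexivity.
        exists p. split; auto. rewrite Heq. apply in_or_app. right; left; reflexivity. }
      rewrite Heq in Hp. destruct (prefix_path Hp) as [q' [Hq' Hpre]].
      assert (CX : subset C (outside_down V E r t)).
      { intros z Cz [[_ [_ [p2 [Hp2 Hz]]]] Hne].
        assert (Hp2' := Hp2). destruct Hp2' as [[q2 [Hq2 _]] _].
        rewrite Hq' in Hpre. rewrite Hq2 in Hp2.
        assert (Hqq := path_unique Hsg Hnc _ _ _ _ Hp2 Hpre).
        rewrite Hq2, Hqq, <- Hq' in Hz.
        apply in_app_or in Hz. destruct Hz as [Hz|[Hz|[]]].
        - exact (Hn z Hz Cz).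
        - apply Hne; symmetry; exact Hz. }
      destruct (Kt_comp HF V E r t) as [Kc Ktt].
      assert (Hv : Kt F V E r t v) by (exists C; auto).
      exists t. split; [exact Ct|split; [exact Htu|]].
      apply (H t (proj1 Htu) _ Kc Ktt v). split; auto.
    + intros u v Huv. destruct (Kt_comp HF V E r u) as [Kc Ktu].
      exists (Kt F V E r u). split; [exact (proj1 (proj2 Kc))|].
      split; [exact Ktu|]. split.
      * apply (H u (proj1 Huv) _ Kc Ktu v). exact Huv.
      * intros x Hx. apply (proj1 Kc x Hx).
  - intros WN Vall t Vt K Kc Kt0 x. split.
    + intros Kx. apply (fwd HF WN t Vt K Kc Kt0 x). auto.
    + intros Hup. apply (fwd HF WN t Vt K Kc Kt0 x) in Hup. tauto.
Qed.
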